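(* Consider an instance of Solitaire Hanabi with a single color ($c=1$), values $1,\dots,n$, hand size $h$, and deck $\sigma=(a_1,\dots,a_N)$ (listing the values of the cards). Call the $i$-th card useless if there exist integers $w_1,\dots,w_{h+1}$ with $a_i<w_1<\dots<w_{h+1}\le n$ such that $a_j\notin\{w_1,\dots,w_{h+1}\}$ for all $j\in\{i+1,\dots,N\}$. Then no winning play sequence plays a useless card.
   Context: Solitaire Hanabi: a card is a pair $(a,k)$ with value $a\in\{1,\dots,n\}$ and color $k\in\{1,\dots,c\}$. The deck is a fully known sequence of $N$ cards drawn one by one in order, starting with an empty hand. When a card is drawn the player may discard it (gone forever), store it in hand, or play it immediately; at no time may more than $h$ cards be stored in hand. A card $(a,k)$ may be played iff either $a=1$ and no card of color $k$ has been played, or the last card of color $k$ played has value $a-1$. After playing a card, the player may also play stored cards obeying the same rule. A winning play sequence is one that plays (one copy of) every card $(a,k)$, $1\le a\le n$, $1\le k\le c$. *)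

(* Defs.v *)
From mathcomp Require Import all_boot.
Set Implicit Arguments. Unset Strict Implicit. Unset Printing Implicit Defensive.

(* The deck is [s : seq nat] listing card values; card i (0-based) has value
   [nth 0 s i].  Cards are identified by their deck index. *)

(* Events of a play sequence.  [Discard], [Store], [PlayNew] act on the next
   drawn card; [PlayHand j] plays the stored card with deck index j, which is
   only allowed right after a play. *)
Inductive event := Discard | Store | PlayNew | PlayHand of nat.

Record state := State {
  drawn : nat;
  hand : seq nat;       (* deck indices of stored cards *)
  top : nat;            (* value of last card played, 0 if none *)
  played : seq nat;     (* deck indices of played cards *)
  justplayed : bool
}.

Definition init_state := State 0 [::] 0 [::] false.

(* (single colour) value a playable iff (a = 1 and nothing played) or last
   played value is a-1; with top = 0 for "nothing played" and values >= 1
   this is exactly top.+1 == a. *)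
Definition playable (top a : nat) : bool := top.+1 == a.

Definition step (h : nat) (s : seq nat) (st : state) (e : event) : option state :=
  match e with
  | Discard =>
      if drawn st < size s then
        Some (State (drawn st).+1 (hand st) (top st) (played st) false)
      else None
  | Store =>
      if (drawn st < size s) && (size (hand st) < h) then
        Some (State (drawn st).+1 (drawn st :: hand st) (top st) (played st) false)
      else None
  | PlayNew =>
      if (drawn st < size s) && playable (top st) (nth 0 s (drawn st)) then
        Some (State (drawn st).+1 (hand st) (nth 0 s (drawn st))
                    (drawn st :: played st) true)
      else None
  | PlayHand j =>
      if [&& justplayed st, j \in hand st & playable (top st) (nth 0 s j)] then
        Some (State (drawn st) (rem j (hand st)) (nth 0 s j)
                    (j :: played st) true)
      else None
  end.

Fixpoint run_from (h : nat) (s : seq nat) (st : state) (es : seq event)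
  : option state :=
  match es with
  | [::] => Some st
  | e :: es' => match step h s st e with
                | Some st' => run_from h s st' es'
                | None => None
                end
  end.

Definition run h s es := run_from h s init_state es.

Definition winning (n h : nat) (s : seq nat) (es : seq event) : Prop :=
  exists st, run h s es = Some st /\
    forall a, 1 <= a <= n -> exists2 j, j \in played st & nth 0 s j = a.

Definition plays_card (h : nat) (s : seq nat) (es : seq event) (i : nat) : Prop :=
  exists st, run h s es = Some st /\ i \in played st.

Definition useless (n h : nat) (s : seq nat) (i : nat) : Prop :=
  exists w : seq nat,
    [/\ size w = h.+1, sorted ltn (nth 0 s i :: w), all (fun x => x <= n) w
      & all (fun x => x \notin drop i.+1 s) w].

(* Main.v *)
Require Import Defs.
From mathcomp Require Import all_boot.
From mathcomp Require Import zify.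
Set Implicit Arguments. Unset Strict Implicit.

Definition Inv h s st := [/\ forall j, j \in played st -> nth 0 s j <= top st,
  size (hand st) <= h & forall j, j \in hand st -> j < drawn st].

Lemma step_inv h s st e st' : Inv h s st -> step h s st e = Some st' -> Inv h s st'.
Proof.
case=> Hp Hh Hd; case: e => [|||j] /=.
- case: ifP => // lt [<-]; split => //= x /Hd; lia.
- case: ifP => // /andP[lt hl] [<-]; split => //= x.
  rewrite inE => /orP[/eqP->|/Hd]; lia.
- case: ifP => // /andP[lt /eqP pl] [<-]; split => /=.
  + move=> x; rewrite inE => /orP[/eqP->//|/Hp]; lia.
  + done.
  + move=> x /Hd; lia.
- case: ifP => // /and3P[_ jin /eqP pl] [<-]; split => /=.
  + move=> x; rewrite inE => /orP[/eqP->//|/Hp]; lia.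
  + rewrite size_rem //; exact: leq_trans (leq_pred _) Hh.
  + by move=> x /mem_rem/Hd.
Qed.

Lemma run_split h s i es : forall st st', Inv h s st -> i \notin played st ->
  run_from h s st es = Some st' -> i \in played st' ->
  exists st1 es2, [/\ Inv h s st1, top st1 = nth 0 s i, i < drawn st1 &
     run_from h s st1 es2 = Some st'].
Proof.
elim: es => [|e es IH] st st' Hi Hn /=.
  by move=> [<-] H; rewrite H in Hn.
case E: (step h s st e) => [st0|] // R Hin.
have Hi0 := step_inv Hi E.
case Hp: (i \in played st0); last first.
  by apply: (IH st0 st') => //; rewrite Hp.
exists st0, es; split => //.
  move: E Hp; case: e => [|||j] /=.
  - by case: ifP => // _ [<-] /= H; rewrite H in Hn.
  - by case: ifP => // _ [<-] /= H; rewrite H in Hn.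
  - case: ifP => // _ [<-] /=; rewrite inE => /orP[/eqP->//|H].
    by rewrite H in Hn.
  - case: ifP => // _ [<-] /=; rewrite inE => /orP[/eqP->//|H].
    by rewrite H in Hn.
move: E Hp; case: e => [|||j] /=.
- by case: ifP => // _ [<-] /= H; rewrite H in Hn.
- by case: ifP => // _ [<-] /= H; rewrite H in Hn.
- case: ifP => // _ [<-] /=; rewrite inE => /orP[/eqP->//|H].
  by rewrite H in Hn.
- case: ifP => // /and3P[_ jin _] [<-] /=; rewrite inE => /orP[/eqP->|H].
    by case: Hi => _ _ /(_ _ jin).
  by rewrite H in Hn.
Qed.

Definition Q s st1 st := [/\ top st1 <= top st, drawn st1 <= drawn st,
  (forall j, j \in hand st -> j \in hand st1 \/ drawn st1 <= j) &
  (forall j, j \in played st -> j \in played st1 \/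
     (top st1 < nth 0 s j /\ (j \in hand st1 \/ drawn st1 <= j)))].

Lemma step_Q h s st1 st e st' : Q s st1 st -> step h s st e = Some st' -> Q s st1 st'.
Proof.
case=> Ht Hd Hh Hp; case: e => [|||j] /=.
- case: ifP => // lt [<-]; split => //=; lia.
- case: ifP => // /andP[lt hl] [<-]; split => //=; first lia.
  move=> x; rewrite inE => /orP[/eqP->|/Hh//]; right; lia.
- case: ifP => // /andP[lt /eqP pl] [<-]; split => //=; try lia.
  move=> x; rewrite inE => /orP[/eqP->|/Hp//]; right; split; [lia|right; lia].
- case: ifP => // /and3P[_ jin /eqP pl] [<-]; split => //=; try lia.
  + by move=> x /mem_rem/Hh.
  + move=> x; rewrite inE => /orP[/eqP->|/Hp//]; right; split; first lia.
    exact: Hh.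
Qed.

Lemma run_Q h s st1 es : forall st st', Q s st1 st ->
  run_from h s st es = Some st' -> Q s st1 st'.
Proof.
elim: es => [|e es IH] st st' HQ /=; first by move=> [<-].
case E: (step h s st e) => [st0|] // R.
exact: (IH st0 st' (step_Q HQ E) R).
Qed.

Theorem mainTheorem2 (n h : nat) (s : seq nat) (i : nat) (es : seq event) :
  all (fun a => 0 < a <= n) s ->
  i < size s ->
  useless n h s i ->
  winning n h s es ->
  ~ plays_card h s es i.
Proof.
move=> Hall Hi [w [Hsz Hsort Hwn Hwd]] [st [Hrun Hcov]] [st' [Hrun' Hin]].
rewrite Hrun in Hrun'; case: Hrun' => Est; subst st'.
have Hinit : Inv h s init_state by split.
have [st1 [es2 [Hi1 Ht1 Hd1 R2]]] := run_split Hinit (isT : i \notin [::]) Hrun Hin.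
have HQ : Q s st1 st.
  apply: (run_Q _ R2); split => // j Hj; by left.
case: HQ => _ _ _ HQp.
have Hmin := order_path_min ltn_trans Hsort.
have Huniq : uniq w := sorted_uniq ltn_trans ltnn (path_sorted Hsort).
have Hsub : {subset w <= map (nth 0 s) (hand st1)}.
  move=> x xw.
  have ltx : nth 0 s i < x := allP Hmin x xw.
  have xn : x <= n := allP Hwn x xw.
  have xnd : x \notin drop i.+1 s := allP Hwd x xw.
  have [j jp jx] : exists2 j, j \in played st & nth 0 s j = x.
    apply: Hcov; lia.
  case: (HQp j jp) => [jp1|[_ [jh|jd]]].
  - case: Hi1 => /(_ _ jp1) + _ _; lia.
  - by rewrite -jx; apply: map_f.
  - exfalso; move/negP: xnd; apply.
    have js : j < size s.
      rewrite ltnNge; apply/negP => /(nth_default 0); lia.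
    have -> : x = nth 0 (drop i.+1 s) (j - i.+1).
      by rewrite nth_drop -jx; congr nth; lia.
    apply: mem_nth; rewrite size_drop; exact: ltn_sub2r (leq_ltn_trans (leq_trans Hd1 jd) js) js.
have := uniq_leq_size Huniq Hsub.
rewrite size_map Hsz; case: Hi1 => _ Hh _; lia.
Qed.
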